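(* Let $T$ be a tree with $\mathrm{pthin}(T)=2$. Then there exists a simple path $C_0$ in $T$ such that every connected component of $T-V(C_0)$ has proper thinness equal to $1$.
   Context: For a graph $G=(V,E)$, a linear ordering $<$ of $V$ and a partition of $V$ into classes are called strongly consistent if for every triple $r<s<t$ of vertices with $rt\in E$: if $r$ and $s$ belong to the same class then $st\in E$, and if $s$ and $t$ belong to the same class then $rs\in E$. The proper thinness $\mathrm{pthin}(G)$ is the minimum $k$ such that some ordering of $V$ and some partition of $V$ into $k$ classes are strongly consistent. $T-X$ denotes the subgraph induced by $V(T)\setminus X$. *)

(* Defs.v *)
From mathcomp Require Import all_boot.
Set Implicit Arguments. Unset Strict Implicit. Unset Printing Implicit Defensive.

Section Graphs.
Variable T : finType.

Definition simple_graph (e : rel T) : Prop := symmetric e /\ irreflexive e.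

Definition connected_graph (e : rel T) : Prop := forall x y : T, connect e x y.

Definition acyclic (e : rel T) : Prop :=
  ~ exists s : seq T, [/\ uniq s, 3 <= size s & cycle e s].

Definition is_tree (e : rel T) : Prop :=
  [/\ simple_graph e, #|T| > 0, connected_graph e & acyclic e].

(* Strong consistency on the induced subgraph G[S]: the linear order of S is
   given by the position in the duplicate-free sequence [ord] enumerating S,
   the partition by the class function [c]. *)
Definition strongly_consistent (e : rel T) (S : {set T}) (ord : seq T)
    (c : T -> nat) : Prop :=
  forall r s t : T, r \in S -> s \in S -> t \in S ->
    index r ord < index s ord -> index s ord < index t ord -> e r t ->
    (c r = c s -> e s t) /\ (c s = c t -> e r s).

Definition pthin_le (e : rel T) (S : {set T}) (k : nat) : Prop :=
  exists (ord : seq T) (c : T -> nat),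
    [/\ uniq ord, [set x in ord] = S, (forall x, x \in S -> c x < k)
      & strongly_consistent e S ord c].

Definition pthin_eq (e : rel T) (S : {set T}) (k : nat) : Prop :=
  pthin_le e S k /\ forall j, j < k -> ~ pthin_le e S j.

Definition simple_path (e : rel T) (p : seq T) : Prop :=
  match p with
  | [::] => False
  | x :: q => path e x q /\ uniq p
  end.

Definition induced (e : rel T) (A : {set T}) : rel T :=
  [rel x y | [&& e x y, x \in A & y \in A]].

Definition component (e : rel T) (A : {set T}) (x : T) : {set T} :=
  [set y in A | connect (induced e A) x y].

End Graphs.

(* Main.v *)
Require Import Defs.
From mathcomp Require Import all_boot.
From mathcomp Require Import zify.
Set Implicit Arguments. Unset Strict Implicit. Unset Printing Implicit Defensive.

Lemma neq_pos (T : finType) (pos : T -> nat) x y : pos x < pos y -> x != y.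
Proof. by move=> h; apply/eqP => E; rewrite E ltnn in h. Qed.

Lemma tri (T : finType) (e : rel T) (pos : T -> nat) : symmetric e -> acyclic e ->
  forall x y z, e x y -> e y z -> e x z -> pos x < pos y -> pos y < pos z -> False.
Proof.
move=> sym ac x y z exy eyz exz pxy pyz; apply: ac; exists [:: x; y; z]; split => //.
  rewrite /= !inE !negb_or (neq_pos pxy) (neq_pos pyz) (neq_pos (ltn_trans pxy pyz)).
  by [].
by rewrite /= exy eyz (sym z x) exz.
Qed.

Lemma quad (T : finType) (e : rel T) (pos : T -> nat) : symmetric e -> acyclic e ->
  forall a b c d, pos a < pos b -> pos b < pos c -> pos c < pos d ->
  [\/ [&& e a b, e b c, e c d & e a d], [&& e a b, e b d, e c d & e a c]
    | [&& e a c, e b c, e b d & e a d]] -> False.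
Proof.
move=> sym ac a b c d pab pbc pcd H; apply: ac.
have nab := neq_pos pab; have nbc := neq_pos pbc; have ncd := neq_pos pcd.
have nac := neq_pos (ltn_trans pab pbc); have nbd := neq_pos (ltn_trans pbc pcd).
have nad := neq_pos (ltn_trans pab (ltn_trans pbc pcd)).
have nba : b != a by rewrite eq_sym. have nca : c != a by rewrite eq_sym.
have nda : d != a by rewrite eq_sym. have ncb : c != b by rewrite eq_sym.
have ndb : d != b by rewrite eq_sym. have ndc : d != c by rewrite eq_sym.
case: H => /and4P [h1 h2 h3 h4].
- exists [:: a; b; c; d]; split => //.
    by rewrite /= !inE !negb_or !(nab,nac,nad,nbc,nbd,ncd,nba,nca,nda,ncb,ndb,ndc).
  by rewrite /= h1 h2 h3 (sym d a) h4.
- exists [:: a; b; d; c]; split => //.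
    by rewrite /= !inE !negb_or !(nab,nac,nad,nbc,nbd,ncd,nba,nca,nda,ncb,ndb,ndc).
  by rewrite /= h1 h2 (sym d c) h3 (sym c a) h4.
- exists [:: a; c; b; d]; split => //.
    by rewrite /= !inE !negb_or !(nab,nac,nad,nbc,nbd,ncd,nba,nca,nda,ncb,ndb,ndc).
  by rewrite /= h1 (sym c b) h2 h3 (sym d a) h4.
Qed.

Ltac spec := repeat match goal with
 | H : ?A /\ ?B |- _ => case: H => ? ?
 | H : ?a = ?a -> _ |- _ => specialize (H erefl)
 | H : 0 = 1 -> _ |- _ => clear H
 | H : 1 = 0 -> _ |- _ => clear H
 | H : is_true ?p -> _, H' : is_true ?p |- _ => specialize (H H')
 end.

Lemma q1 (T : finType) (e : rel T) (pos : T -> nat) : symmetric e -> acyclic e ->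
  forall a b c d, pos a < pos b -> pos b < pos c -> pos c < pos d ->
  e a b -> e b c -> e c d -> e a d -> False.
Proof. move=> sym ac a b c d h1 h2 h3 ????; apply: (quad sym ac h1 h2 h3); apply: Or31; exact/and4P. Qed.
Lemma q2 (T : finType) (e : rel T) (pos : T -> nat) : symmetric e -> acyclic e ->
  forall a b c d, pos a < pos b -> pos b < pos c -> pos c < pos d ->
  e a b -> e b d -> e c d -> e a c -> False.
Proof. move=> sym ac a b c d h1 h2 h3 ????; apply: (quad sym ac h1 h2 h3); apply: Or32; exact/and4P. Qed.
Lemma q3 (T : finType) (e : rel T) (pos : T -> nat) : symmetric e -> acyclic e ->
  forall a b c d, pos a < pos b -> pos b < pos c -> pos c < pos d ->
  e a c -> e b c -> e b d -> e a d -> False.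
Proof. move=> sym ac a b c d h1 h2 h3 ????; apply: (quad sym ac h1 h2 h3); apply: Or33; exact/and4P. Qed.

Ltac close TRI Q1 Q2 Q3 pos := match goal with
 | H1 : is_true (?E ?x ?y), H2 : is_true (?E ?y ?z), H3 : is_true (?E ?x ?z) |- _ =>
     exact: (TRI pos x y z H1 H2 H3 ltac:(assumption) ltac:(assumption))
 | H1 : is_true (?E ?a ?b), H2 : is_true (?E ?b ?c), H3 : is_true (?E ?c ?d), H4 : is_true (?E ?a ?d) |- _ =>
     exact: (Q1 pos a b c d ltac:(assumption) ltac:(assumption) ltac:(assumption) H1 H2 H3 H4)
 | H1 : is_true (?E ?a ?b), H2 : is_true (?E ?b ?d), H3 : is_true (?E ?c ?d), H4 : is_true (?E ?a ?c) |- _ =>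
     exact: (Q2 pos a b c d ltac:(assumption) ltac:(assumption) ltac:(assumption) H1 H2 H3 H4)
 | H1 : is_true (?E ?a ?c), H2 : is_true (?E ?b ?c), H3 : is_true (?E ?b ?d), H4 : is_true (?E ?a ?d) |- _ =>
     exact: (Q3 pos a b c d ltac:(assumption) ltac:(assumption) ltac:(assumption) H1 H2 H3 H4)
 end.

Lemma five (T : finType) (e : rel T) (pos c : T -> nat) :
  symmetric e -> acyclic e -> (forall x, c x < 2) ->
  (forall x y z, pos x < pos y -> pos y < pos z -> e x z ->
     (c x = c y -> e y z) /\ (c y = c z -> e x y)) ->
  forall r t u v s, pos u < pos r -> pos r < pos s -> pos s < pos t ->
  pos u < pos s -> pos s < pos v -> pos t != pos v -> e r t -> e u v -> False.
Proof.
move=> sym ac c2 sc r t u v s pur prs pst pus psv ptv0 ert euv.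
have TRI := tri sym ac; have Q1 := q1 sym ac; have Q2 := q2 sym ac; have Q3 := q3 sym ac.
have cl : forall x, c x = 0 \/ c x = 1.
  by move=> x; move: (c2 x); case: (c x) => [|[|]]; auto.
have prv : pos r < pos v by lia.
have JS := sc _ _ _ pus psv euv.
have JR := sc _ _ _ pur prv euv.
have IS := sc _ _ _ prs pst ert.
have [ptv|ptv] : pos t < pos v \/ pos v < pos t by lia.
- (* case A: u<r<s<t<v *)
  have prt : pos r < pos t by lia.
  have JT := sc _ _ _ (ltn_trans pur prt) ptv euv.
  have put : pos u < pos t by lia. have psv' : pos s < pos v by lia.
  have prv' : pos r < pos v by lia. have puv : pos u < pos v by lia.
  case: (cl u) => cu; case: (cl r) => cr; case: (cl s) => cs; case: (cl t) => ct;
  case: (cl v) => cv; rewrite ?cu ?cr ?cs ?ct ?cv in JS JR IS JT; spec; close TRI Q1 Q2 Q3 pos.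
- (* case B: u<r<s<v<t *)
  have IV := sc _ _ _ prv ptv ert.
  have RVS := fun h => sc _ _ _ prs psv h.
  have pur' : pos u < pos t by lia. have prt : pos r < pos t by lia.
  have pst' : pos s < pos t by lia. have puv : pos u < pos v by lia.
  case: (cl u) => cu; case: (cl r) => cr; case: (cl s) => cs; case: (cl t) => ct;
  case: (cl v) => cv; rewrite ?cu ?cr ?cs ?ct ?cv in JS JR IS IV RVS; spec; close TRI Q1 Q2 Q3 pos.
Qed.

Lemma cross (T : finType) (e : rel T) (pos : T -> nat) k : forall q x,
  path e x q -> pos x < k -> k < pos (last x q) ->
  (forall y, y \in x :: q -> pos y != k) ->
  exists u v, [/\ u \in x :: q, v \in x :: q, e u v, pos u < k & k < pos v].
Proof.
elim=> [|y q IH] x /=; first by move=> _ h1 h2; lia.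
case/andP=> exy pq hx hl hne.
have : pos y != k by apply: hne; rewrite !inE eqxx orbT.
move=> hyk; have [hy|hy] : pos y < k \/ k < pos y by lia.
- have [u [v [hu hv euv h1 h2]]] := IH y pq hy hl (fun z hz => hne z ltac:(by rewrite inE hz orbT)).
  by exists u, v; split => //; rewrite inE ?hu ?hv orbT.
- by exists x, y; split => //; rewrite !inE eqxx ?orbT.
Qed.

Lemma idx_filter (T : eqType) (P : pred T) s y z : P y -> P z ->
  index y [seq w <- s | P w] < index z [seq w <- s | P w] -> index y s < index z s.
Proof.
move=> Py Pz; elim: s => [|w s IH] //=.
case: (eqVneq w y) => [Ewy|nwy]; case: (eqVneq w z) => [Ewz|nwz] //=; subst.
- by rewrite ltnn.
- by rewrite Pz /= eqxx.
- by case: (P w) => /=; rewrite ?(negbTE nwy) ?(negbTE nwz) //; move=> h; apply: IH.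
Qed.

Theorem corollary3 (T : finType) (e : rel T) :
  is_tree e -> pthin_eq e [set: T] 2 ->
  exists C0 : seq T,
    simple_path e C0 /\
    (forall x : T, x \notin C0 ->
       pthin_eq e (component e (~: [set y in C0]) x) 1).
Proof.
move=> [[sym irr] n0 conn ac] [[ord [c [uq hset hc hsc]]] _].
have inord : forall x, x \in ord.
  move=> x; have: x \in [set: T] by rewrite inE.
  by rewrite -hset inE.
pose pos := fun x => index x ord.
have sc : forall x y z, pos x < pos y -> pos y < pos z -> e x z ->
    (c x = c y -> e y z) /\ (c y = c z -> e x y) :=
  fun x y z => hsc x y z (in_setT x) (in_setT y) (in_setT z).
have c2 : forall x, c x < 2 := fun x => hc x (in_setT x).
have [x0 _] := card_gt0P n0.
have sz : 0 < size ord.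
  by rewrite lt0n size_eq0; apply/eqP => E; have := inord x0; rewrite E.
pose a := nth x0 ord 0. pose b := nth x0 ord (size ord).-1.
have pa : pos a = 0 by rewrite /pos /a index_uniq.
have pb : pos b = (size ord).-1.
  by rewrite /pos /b index_uniq // ltn_predL.
have posinj : forall x y, pos x = pos y -> x = y.
  move=> x y h; rewrite -(nth_index x0 (inord x)) -(nth_index x0 (inord y)).
  by congr nth; exact h.
have /connectP [p0 pth lst] := conn a b.
move: lst; case/shortenP: pth => p pth uqp _ lst.
exists (a :: p); split; first by split.
have key : forall r s t, r \notin a :: p -> s \notin a :: p -> t \notin a :: p ->
    pos r < pos s -> pos s < pos t -> e r t -> False.
  move=> r s t rn sn tn prs pst ert.
  have hsa : pos a < pos s.
    rewrite pa lt0n; apply/eqP => h; move: sn; rewrite -(posinj _ _ (etrans h (esym pa))).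
    by rewrite mem_head.
  have hsb : pos s < pos (last a p).
    rewrite -lst pb.
    have : pos s < size ord by rewrite /pos index_mem.
    have : pos s != (size ord).-1.
      apply/eqP => h; move: sn; rewrite (posinj _ _ (etrans h (esym pb))) lst.
      by rewrite mem_last.
    lia.
  have hne : forall y, y \in a :: p -> pos y != pos s.
    move=> y yin; apply/eqP => h; move: sn; by rewrite -(posinj _ _ h) yin.
  have [u [v [uin vin euv pus psv]]] := cross pth hsa hsb hne.
  have nur : pos u != pos r.
    by apply/eqP => h; move: rn; rewrite -(posinj _ _ h) uin.
  have ntv : pos t != pos v.
    by apply/eqP => h; move: tn; rewrite (posinj _ _ h) vin.
  have [pur|pru] : pos u < pos r \/ pos r < pos u by lia.
  - exact: (five sym ac c2 sc pur prs pst pus psv ntv ert euv).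
  - have ntv' : pos v != pos t by rewrite eq_sym.
    exact: (five sym ac c2 sc pru pus psv prs pst ntv' euv ert).
move=> x xn.
pose S := component e (~: [set y in a :: p]) x.
have inS : forall y, y \in S -> y \notin a :: p.
  by move=> y; rewrite /S /component in_set in_setC in_set => /andP[].
have xS : x \in S by rewrite /S /component in_set in_setC in_set xn connect0.
split.
- exists [seq y <- ord | y \in S], (fun _ => 0); split.
  + exact: filter_uniq.
  + by apply/setP => y; rewrite in_set mem_filter inord andbT.
  + by [].
  + move=> r s t rS sS tS h1 h2 ert; exfalso.
    apply: (key r s t (inS _ rS) (inS _ sS) (inS _ tS) _ _ ert).
    * exact: (idx_filter rS sS h1).
    * exact: (idx_filter sS tS h2).
- move=> j; rewrite ltnS leqn0 => /eqP -> [ord' [c' [_ _ h _]]].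
  by have := h x xS.
Qed.
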